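(* Let $x_1,x_2,x_3,x_4\in\mathbb{Z}^3$ be the vertices of a Fano tetrahedron, and let $\lambda_1,\ldots,\lambda_4$ be non-negative integers with $\gcd(\lambda_1,\ldots,\lambda_4)=1$ such that, with $h=\lambda_1+\cdots+\lambda_4$, the numbers $\lambda_i/h$ are the barycentric coordinates of the origin with respect to $x_1,\ldots,x_4$ (i.e. $\sum_i\lambda_ix_i=0$). Then (i) $\sum_{i=1}^4\left\{\frac{\kappa\lambda_i}{h}\right\}=2$ for all integers $\kappa\in\{2,\ldots,h-2\}$, and (ii) $\gcd(\lambda_i,\lambda_j)=1$ for all $i\neq j$.
   Context: A tetrahedron is called Fano if its vertices lie in $\mathbb{Z}^3$ and the only lattice point it contains other than its vertices is the origin, which lies strictly in its interior. $\{q\}=q-\lfloor q\rfloor$ denotes the fractional part of $q\in\mathbb{Q}$. *)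

(* Defs.v *)
From HB Require Import structures.
From mathcomp Require Import all_boot all_order all_algebra.
Set Implicit Arguments. Unset Strict Implicit. Unset Printing Implicit Defensive.
Import Order.TTheory GRing.Theory Num.Theory.
Local Open Scope ring_scope.

Definition toQ (p : 'rV[int]_3) : 'rV[rat]_3 := map_mx (fun z : int => z%:~R) p.

Definition in_tetra (x : 'I_4 -> 'rV[rat]_3) (p : 'rV[rat]_3) : Prop :=
  exists mu : 'I_4 -> rat,
    (forall i, 0 <= mu i) /\ \sum_i mu i = 1 /\ \sum_i mu i *: x i = p.

Definition in_interior (x : 'I_4 -> 'rV[rat]_3) (p : 'rV[rat]_3) : Prop :=
  exists mu : 'I_4 -> rat,
    (forall i, 0 < mu i) /\ \sum_i mu i = 1 /\ \sum_i mu i *: x i = p.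

Definition aff_indep (x : 'I_4 -> 'rV[rat]_3) : Prop :=
  forall mu : 'I_4 -> rat,
    \sum_i mu i = 0 -> \sum_i mu i *: x i = 0 -> forall i, mu i = 0.

Definition fano (x : 'I_4 -> 'rV[int]_3) : Prop :=
  aff_indep (fun i => toQ (x i)) /\
  in_interior (fun i => toQ (x i)) 0 /\
  (forall p : 'rV[int]_3, in_tetra (fun i => toQ (x i)) (toQ p) ->
     p = 0 \/ exists i, p = x i).

Definition fracpart (q : rat) : rat := q - (Num.floor q)%:~R.

(* Main.v *)
Require Import Defs.
From HB Require Import structures.
From mathcomp Require Import all_boot all_order all_algebra.
From mathcomp Require Import zify ring lra.
Import Order.TTheory GRing.Theory Num.Theory.
Local Open Scope ring_scope.

Lemma toQ_sum (a : 'I_4 -> int) (v : 'I_4 -> 'rV[int]_3) :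
  toQ (\sum_i a i *: v i) = \sum_i (a i)%:~R *: toQ (v i).
Proof.
rewrite /toQ map_mx_sum; apply: eq_bigr => i _. by rewrite map_mxZ.
Qed.

Lemma toQZ (a : int) (v : 'rV[int]_3) : toQ (a *: v) = a%:~R *: toQ v.
Proof. by rewrite /toQ map_mxZ. Qed.

Lemma toQ0 : toQ 0 = 0.
Proof. by rewrite /toQ map_mx0. Qed.

Lemma sum4 (F : 'I_4 -> nat) : (\sum_i F i = F (@Ordinal 4 0 isT) + F (@Ordinal 4 1 isT) + F (@Ordinal 4 2 isT) + F (@Ordinal 4 3 isT))%N.
Proof. rewrite !big_ord_recl big_ord0 addn0 !addnA. congr (_ + _ + _ + _); congr F; exact: val_inj. Qed.

Lemma frac_nat (n h : nat) : (0 < h)%N -> fracpart (n%:R / h%:R : rat) = (n %% h)%:R / h%:R.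
Proof.
move=> h0. have hn : (h%:R : rat) != 0 by rewrite pnatr_eq0 -lt0n.
rewrite /fracpart {1 2}(divn_eq n h) natrD natrM mulrDl mulfK //.
rewrite real_floorDzr ?rpred_nat ?num_real //=.
have -> : Num.floor ((n %% h)%:R / h%:R : rat) = 0.
  apply: floor_def; rewrite add0r /= mulr0z mulr1z divr_ge0 ?ler0n //=.
  by rewrite ltr_pdivrMr ?ltr0n // mul1r ltr_nat ltn_pmod.
have -> : Num.floor ((n %/ h)%:R : rat) = (n %/ h)%:Z by exact: (intrKfloor (Posz (n %/ h))).
by rewrite addr0 pmulrn addrC addKr.
Qed.

Lemma aff_int (x : 'I_4 -> 'rV[int]_3) (a : 'I_4 -> int) :
  aff_indep (fun i => toQ (x i)) ->
  \sum_i a i = 0 -> \sum_i a i *: x i = 0 -> forall i, a i = 0.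
Proof.
move=> H sa sx i.
suff: ((a i)%:~R : rat) = 0 by move/eqP; rewrite intr_eq0; move/eqP.
apply: (H (fun i => (a i)%:~R)).
- by rewrite -rmorph_sum sa.
- by rewrite -toQ_sum sx toQ0.
Qed.

Lemma Posz_sum (F : 'I_4 -> nat) : \sum_i (F i)%:Z = (\sum_i F i)%N%:Z.
Proof. by rewrite (big_morph Posz PoszD (erefl 0%:Z)). Qed.

Lemma geo (x : 'I_4 -> 'rV[int]_3) (lam r : 'I_4 -> nat) (h : nat) (P : 'rV[int]_3) :
  fano x -> (0 < h)%N -> (\sum_i lam i)%N = h -> \sum_i (lam i)%:Z *: x i = 0 ->
  (forall i, r i < h)%N -> (\sum_i r i)%N = h ->
  h%:Z *: P = \sum_i (r i)%:Z *: x i -> forall i, r i = lam i.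
Proof.
move=> [Hai [_ Hlat]] h0 sl sx rh sr hP.
have hn : (h%:R : rat) != 0 by rewrite pnatr_eq0 -lt0n.
have tet : in_tetra (fun i => toQ (x i)) (toQ P).
  exists (fun i => (r i)%:R / h%:R); split; [|split].
  - by move=> i; rewrite divr_ge0 ?ler0n.
  - by rewrite -mulr_suml -natr_sum sr mulfV.
  - have := congr1 toQ hP; rewrite toQZ toQ_sum => e.
    apply: (@scalerI _ _ (h%:R : rat)) => //.
    rewrite scaler_sumr; transitivity (\sum_i ((r i)%:Z)%:~R *: toQ (x i) : 'rV[rat]_3).
      apply: eq_bigr => i _; rewrite scalerA mulrC mulfVK //.
    by rewrite -e.
case: (Hlat P tet) => [P0|[j Pj]].
- move=> i; apply/eqP; rewrite -(eqz_nat (r i)) -subr_eq0; apply/eqP.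
  move: i; apply: (@aff_int x (fun i => (r i)%:Z - (lam i)%:Z) Hai).
  + by rewrite sumrB !Posz_sum sr sl subrr.
  + rewrite (eq_bigr (fun i => (r i)%:Z *: x i - (lam i)%:Z *: x i)); last by move=> i _; rewrite scalerBl.
    by rewrite sumrB sx -hP P0 scaler0 subrr.
- exfalso.
  have E : (r j)%:Z - h%:Z = 0.
    have := @aff_int x (fun i => (r i)%:Z - (if i == j then h%:Z else 0)) Hai _ _ j.
    rewrite eqxx; apply.
    + rewrite sumrB Posz_sum sr (bigD1 j) //= eqxx big1 ?addr0 ?subrr //.
      by move=> k /negbTE ->.
    + rewrite (eq_bigr (fun i => (r i)%:Z *: x i - (if i == j then h%:Z else 0) *: x i)); last by move=> i _; rewrite scalerBl.
      rewrite sumrB -hP Pj (bigD1 j) //= eqxx big1 ?addr0 ?subrr //.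
      by move=> k /negbTE ->; rewrite scale0r.
  move: E; move/eqP; rewrite subr_eq0 eqz_nat; move/eqP => rj.
  by have := rh j; rewrite rj ltnn.
Qed.

Notation o0 := (@Ordinal 4 0 isT).
Notation o1 := (@Ordinal 4 1 isT).
Notation o2 := (@Ordinal 4 2 isT).
Notation o3 := (@Ordinal 4 3 isT).

Lemma ord4_cases (P : 'I_4 -> Prop) : P o0 -> P o1 -> P o2 -> P o3 -> forall i, P i.
Proof.
by move=> ? ? ? ? [[|[|[|[|//]]]] Hi]; rewrite (bool_irrelevance Hi isT).
Qed.

Lemma dvd_s_h (h s : nat) : (h %| s)%N -> (0 < s)%N -> (s < 2 * h)%N -> s = h.
Proof. move/dvdnP => [t ->]; case: t => [|[|t]] //=; nia. Qed.

Lemma modcomp (h k l : nat) : (0 < h)%N -> (k <= h)%N -> (0 < (k * l) %% h)%N ->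
  (((h - k) * l) %% h = h - (k * l) %% h)%N.
Proof.
move=> h0 kh r0.
have lt1 := ltn_pmod ((h - k) * l) h0. have lt2 := ltn_pmod (k * l) h0.
suff: ((h - k) * l %% h + (k * l) %% h)%N = h by lia.
apply: dvd_s_h; [|lia|lia].
by rewrite /dvdn modnDm -mulnDl subnK // mulnC modnMl.
Qed.

Lemma gcd_lem (lam : 'I_4 -> nat) (h c : nat) :
  \big[gcdn/0%N]_(i < 4) lam i = 1%N -> (forall i, h %| c * lam i)%N -> (h %| c)%N.
Proof.
move=> Hg H.
have : (h %| \big[gcdn/0%N]_(i < 4) (c * lam i))%N by apply/dvdn_biggcdP => i _; exact: H.
by rewrite -(big_morph (muln c) (muln_gcdr c) (muln0 c)) Hg muln1.
Qed.

Theorem proposition2p5 (x : 'I_4 -> 'rV[int]_3) (lambda : 'I_4 -> nat) :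
  fano x ->
  \big[gcdn/0%N]_(i < 4) lambda i = 1%N ->
  \sum_(i < 4) (lambda i)%:Z *: x i = 0 ->
  let h := (\sum_(i < 4) lambda i)%N in
  (forall kappa : nat, (2 <= kappa)%N -> (kappa <= h - 2)%N ->
     \sum_(i < 4) fracpart (((kappa * lambda i)%N%:R / h%:R) : rat) = 2) /\
  (forall i j : 'I_4, i != j -> coprime (lambda i) (lambda j)).
Proof.
move=> Hf Hg Hs h.
have Hf' := Hf; case: Hf' => [Hai [[mu [mu0 [mu1 musum]]] _]].
have h0 : (0 < h)%N.
  rewrite lt0n; apply/negP => /eqP h0.
  have l0 : forall i, lambda i = 0%N.
    move: h0; rewrite /h sum4 => h0; apply: ord4_cases; lia.
  by move: Hg; rewrite big1 // => i _; exact: l0.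
have hn : (h%:R : rat) != 0 by rewrite pnatr_eq0 -lt0n.
have lpos : forall i, (0 < lambda i)%N.
  have e : forall i, (lambda i)%:R = h%:R * mu i :> rat.
    move=> i; apply/eqP; rewrite -subr_eq0; apply/eqP; move: i.
    apply: Hai.
    - by rewrite sumrB -mulr_sumr mu1 mulr1 -natr_sum subrr.
    - rewrite (eq_bigr (fun i => (lambda i)%:R *: toQ (x i) - h%:R *: (mu i *: toQ (x i)))); last by move=> i _; rewrite scalerBl scalerA.
      rewrite sumrB -scaler_sumr musum scaler0 subr0.
      have := toQ_sum (fun i => (lambda i)%:Z) x; rewrite Hs toQ0 => E.
      by rewrite [RHS]E; apply: eq_bigr => i _; rewrite pmulrn.
  move=> i; have := e i; have := mu0 i => m0 e'.
  by rewrite -(ltr0n rat) e' mulr_gt0 // ltr0n.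
have lh : forall i, (lambda i < h)%N.
  have := lpos; rewrite /h sum4 => lp; apply: ord4_cases; have := lp o0; have := lp o1; have := lp o2; have := lp o3; lia.
pose S k := (\sum_i (k * lambda i) %% h)%N.
pose Q k := (\sum_i (k * lambda i) %/ h)%N.
have SQ : forall k, (k * h = Q k * h + S k)%N.
  move=> k; rewrite /Q /S big_distrl -big_split /= {1}/h big_distrr /=.
  by apply: eq_bigr => i _; rewrite -divn_eq.
have Slt : forall k, (S k < 4 * h)%N.
  move=> k; rewrite /S sum4.
  have := ltn_pmod (k * lambda o0) h0; have := ltn_pmod (k * lambda o1) h0.
  have := ltn_pmod (k * lambda o2) h0; have := ltn_pmod (k * lambda o3) h0. lia.
have Sk : forall k, exists2 t, (t < 4)%N & S k = (t * h)%N.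
  move=> k; exists (k - Q k)%N; last by rewrite mulnBl SQ addKn.
  by rewrite -(ltn_pmul2r h0) mulnBl SQ addKn.
have hP : forall k, h%:Z *: (- \sum_i ((k * lambda i) %/ h)%:Z *: x i) = \sum_i ((k * lambda i) %% h)%:Z *: x i.
  move=> k.
  have e : forall i, ((k * lambda i) %% h)%:Z *: x i = (k * lambda i)%:Z *: x i - h%:Z *: (((k * lambda i) %/ h)%:Z *: x i).
    move=> i; rewrite scalerA -scalerBl; congr (_ *: _).
    rewrite {2}(divn_eq (k * lambda i) h) PoszD PoszM. ring.
  rewrite (eq_bigr _ (fun i _ => e i)) sumrB.
  have E1 : \sum_i (k * lambda i)%:Z *: x i = 0.
    rewrite (eq_bigr (fun i => k%:Z *: ((lambda i)%:Z *: x i))); last by move=> i _; rewrite scalerA PoszM.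
    by rewrite -scaler_sumr Hs scaler0.
  by rewrite E1 sub0r -scaler_sumr scalerN.
have C0 : forall k, (0 < k < h)%N -> S k <> 0%N.
  move=> k /andP[k0 kh] S0.
  have r0 : forall i, ((k * lambda i) %% h = 0)%N.
    move: S0; rewrite /S sum4 => S0; apply: ord4_cases; lia.
  have : (h %| k)%N by apply: (@gcd_lem lambda h k Hg) => i; rewrite /dvdn r0.
  by move/(dvdn_leq k0); rewrite leqNgt kh.
have C1 : forall k, (2 <= k)%N -> (k <= h - 2)%N -> S k <> h.
  move=> k k2 kh Sh.
  have rl := @geo x lambda (fun i => ((k * lambda i) %% h)%N) h _ Hf h0 (erefl h) Hs (fun i => ltn_pmod _ h0) Sh (hP k).
  have : (h %| (k - 1))%N.
    apply: (@gcd_lem lambda h (k - 1) Hg) => i; rewrite mulnBl mul1n -eqn_mod_dvd; last by rewrite leq_pmull //; lia.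
    by rewrite rl modn_small.
  move/dvdn_leq; lia.
have S2 : forall k, (2 <= k)%N -> (k <= h - 2)%N -> S k = (2 * h)%N.
  move=> k k2 kh; have [t t4 St] := Sk k.
  move: t4 St; case: t => [|[|[|[|//]]]] _ St.
  - by exfalso; apply: (C0 k) => //; apply/andP; split; lia.
  - by exfalso; apply: (C1 k) => //; lia.
  - by [].
  exfalso; apply: (C1 (h - k)%N); [lia|lia|].
  have rp : forall i, (0 < (k * lambda i) %% h)%N.
    move: St; rewrite /S sum4 => St.
    have := ltn_pmod (k * lambda o0) h0; have := ltn_pmod (k * lambda o1) h0.
    have := ltn_pmod (k * lambda o2) h0; have := ltn_pmod (k * lambda o3) h0.
    move=> ? ? ? ?; apply: ord4_cases; lia.
  have e : forall i, (((h - k) * lambda i) %% h = h - (k * lambda i) %% h)%N.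
    by move=> i; apply: modcomp => //; lia.
  move: St; rewrite /S !sum4 !e.
  have := ltn_pmod (k * lambda o0) h0; have := ltn_pmod (k * lambda o1) h0.
  have := ltn_pmod (k * lambda o2) h0; have := ltn_pmod (k * lambda o3) h0.
  lia.
split.
  move=> k k2 kh.
  rewrite (eq_bigr _ (fun i _ => @frac_nat (k * lambda i) h h0)) -mulr_suml -natr_sum.
  by rewrite -/(S k) S2 // natrM mulfK.
have h4 : (4 <= h)%N.
  have := lpos; rewrite /h sum4 => lp; have := lp o0; have := lp o1; have := lp o2; have := lp o3; lia.
have S1 : S 1%N = h.
  by rewrite /S (eq_bigr (fun i => lambda i)) // => i _; rewrite mul1n modn_small.
have hij' : forall i j, i != j -> (lambda i + lambda j + 2 <= h)%N.
  have := lpos; rewrite /h sum4 => lp; have := lp o0; have := lp o1; have := lp o2; have := lp o3 => p3 p2 p1 p0.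
  move=> i' j'; elim/ord4_cases: i'; elim/ord4_cases: j'; rewrite ?eqxx // => _; lia.
move=> i j ij; apply/negP => Hnc.
have hij := hij' i j ij.
set d := gcdn (lambda i) (lambda j).
have d0 : (0 < d)%N by rewrite gcdn_gt0 lpos.
have d2 : (2 <= d)%N by move: Hnc; rewrite /coprime -/d; lia.
have ai := divnK (dvdn_gcdl (lambda i) (lambda j)).
have aj := divnK (dvdn_gcdr (lambda i) (lambda j)).
rewrite -/d in ai aj.
set q := ((h - 1) %/ d)%N.
have q1 : (q * d <= h - 1)%N by apply: leq_trunc_div.
have q2 : (h - 1 < q.+1 * d)%N by apply: ltn_ceil.
have dli : (d <= lambda i)%N by apply: dvdn_leq; [exact: lpos | exact: dvdn_gcdl].
have dlj : (d <= lambda j)%N by apply: dvdn_leq; [exact: lpos | exact: dvdn_gcdr].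
have qge : (1 <= q)%N.
  rewrite lt0n; apply/negP => /eqP q0; move: q2; rewrite q0 mul1n; lia.
have qle : (q.+1 <= h - 2)%N.
  have : (q * 2 <= q * d)%N by rewrite leq_mul2l d2 orbT.
  lia.
have jump : forall l, (d %| lambda l)%N -> (q * lambda l %/ h < q.+1 * lambda l %/ h)%N.
  move=> l dl; have al := divnK dl.
  have alp : (0 < lambda l %/ d)%N by rewrite divn_gt0 // dvdn_leq // lpos.
  apply: (@leq_trans (lambda l %/ d)).
    rewrite ltn_divLR // -{1}al mulnCA ltn_pmul2l //; lia.
  rewrite leq_divRL // -{2}al mulnCA leq_pmul2l //; lia.
have mono : forall l, (q * lambda l %/ h <= q.+1 * lambda l %/ h)%N.
  by move=> l; apply: leq_div2r; apply: leq_mul.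
have Qge : (Q q + 2 <= Q q.+1)%N.
  have split3 : forall k, Q k = (k * lambda i %/ h + (k * lambda j %/ h + \sum_(l < 4 | (l != i) && (l != j)) (k * lambda l %/ h)))%N.
    by move=> k; rewrite /Q (bigD1 i) //= (bigD1 j) //= eq_sym.
  rewrite !split3.
  have := jump i (dvdn_gcdl _ _); have := jump j (dvdn_gcdr _ _).
  have : (\sum_(l < 4 | (l != i) && (l != j)) (q * lambda l %/ h) <= \sum_(l < 4 | (l != i) && (l != j)) (q.+1 * lambda l %/ h))%N.
    by apply: leq_sum => l _; apply: mono.
  lia.
have Sq : (S q <= 2 * h)%N.
  case: (ltngtP q 1) => [|q1'|->]; [lia| |by rewrite S1; lia].
  rewrite S2 //; lia.
have S2q : S q.+1 = (2 * h)%N by apply: S2; lia.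
have := SQ q; have := SQ q.+1; rewrite S2q.
have : ((Q q + 2) * h <= Q q.+1 * h)%N by rewrite leq_mul2r Qge orbT.
rewrite mulnDl mulSn; lia.
Qed.
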